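(* Let $F:\mathbb{R}^n\rightrightarrows\mathbb{R}^p$ and $G:\mathbb{R}^n\rightrightarrows\mathbb{R}^q$ be nearly convex set-valued mappings and $\Theta\subset\mathbb{R}^n$ a nearly convex set such that $\operatorname{ri}(\operatorname{dom} F)\cap\operatorname{ri}(\operatorname{dom} G)\cap\operatorname{ri}\Theta\neq\emptyset$. Then the set-valued mapping $\Psi:\mathbb{R}^n\times\mathbb{R}^n\times\mathbb{R}^q\rightrightarrows\mathbb{R}^p$ defined by $\Psi(x,u,y)=F(x+u)$ if $x\in\Theta$ and $y\in G(x)$, and $\Psi(x,u,y)=\emptyset$ otherwise, is nearly convex.
   Context: A set $\Omega\subset\mathbb{R}^k$ is nearly convex if there is a convex set $C$ with $C\subset\Omega\subset\overline{C}$. For an arbitrary set $\Omega$, $\operatorname{ri}\Omega=\{a\in\Omega:\exists\delta>0,\ B(a;\delta)\cap\operatorname{aff}\Omega\subset\Omega\}$. For a set-valued mapping $F$: $\operatorname{dom} F=\{x:F(x)\neq\emptyset\}$, $\operatorname{gph} F=\{(x,y):y\in F(x)\}$; $F$ is nearly convex if $\operatorname{gph} F$ is nearly convex. *)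

(* Defs.v *)
(* R^k is modelled as 'rV[R]_k over R : realType. *)
From mathcomp Require Import all_boot all_order all_algebra.
From mathcomp Require Import all_classical all_reals all_analysis.
Set Implicit Arguments. Unset Strict Implicit. Unset Printing Implicit Defensive.
Import Order.TTheory GRing.Theory Num.Theory.
Import numFieldNormedType.Exports.
Local Open Scope classical_set_scope.
Local Open Scope ring_scope.

Section Defs.
Variable R : realType.

Definition convex_set (V : lmodType R) (C : set V) : Prop :=
  forall x y, C x -> C y -> forall t : R, 0 <= t -> t <= 1 ->
    C (t *: x + (1 - t) *: y).

Definition nearly_convex (V : normedModType R) (Om : set V) : Prop :=
  exists C : set V, convex_set C /\ C `<=` Om /\ Om `<=` closure C.

Definition aff (V : lmodType R) (Om : set V) : set V :=
  [set x | exists (k : nat) (a : 'I_k -> V) (l : 'I_k -> R),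
     (forall i, Om (a i)) /\ \sum_(i < k) l i = 1 /\ x = \sum_(i < k) l i *: a i].

Definition ri (V : normedModType R) (Om : set V) : set V :=
  [set a | Om a /\ exists d : R, 0 < d /\ (ball a d `&` aff Om `<=` Om)].

(* set-valued mappings X ⇉ Y are functions X -> set Y *)
Definition dom (X Y : Type) (F : X -> set Y) : set X := [set x | F x !=set0].
Definition gph (X Y : Type) (F : X -> set Y) : set (X * Y) :=
  [set z | F z.1 z.2].

Definition nearly_convex_map (X Y : normedModType R) (F : X -> set Y) : Prop :=
  nearly_convex (gph F).

End Defs.

(* Main.v *)
Require Import Defs.
From HB Require Import structures.
From mathcomp Require Import all_boot all_order all_algebra.
From mathcomp Require Import all_classical all_reals all_analysis.
From mathcomp Require Import ring lra.
Import Order.TTheory GRing.Theory Num.Theory.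
Import numFieldNormedType.Exports.
Local Open Scope classical_set_scope.
Local Open Scope ring_scope.

Lemma split_l m n (j : 'I_m) : fintype.split (lshift n j) = inl j.
Proof. exact: (unsplitK (inl j)). Qed.
Lemma split_r m n (j : 'I_n) : fintype.split (rshift m j) = inr j.
Proof. exact: (unsplitK (inr j)). Qed.

Section AffL.
Variable R : realType.
Variable V : lmodType R.

Lemma aff_sub (O : set V) x : O x -> aff O x.
Proof.
move=> Ox; exists 1%N, (fun _ => x), (fun _ => 1); split => //.
by rewrite !big_ord1 scale1r.
Qed.

Lemma aff_comb2 (O : set V) x y (al : R) :
  aff O x -> aff O y -> aff O (al *: x + (1 - al) *: y).
Proof.
move=> [k1 [pa [wa [HO1 [s1 ->]]]]] [k2 [pb [wb [HO2 [s2 ->]]]]].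
exists (k1 + k2)%N,
  (fun i => match fintype.split i with inl j => pa j | inr j => pb j end),
  (fun i => match fintype.split i with inl j => al * wa j | inr j => (1 - al) * wb j end).
split; first by move=> i; case: (fintype.split i).
rewrite !big_split_ord /=; split.
  under eq_bigr do rewrite split_l.
  under [X in _ + X]eq_bigr do rewrite split_r.
  by rewrite -!mulr_sumr s1 s2 !mulr1 addrC subrK.
rewrite !scaler_sumr; congr (_ + _); apply: eq_bigr => i _.
  by rewrite split_l scalerA.
by rewrite split_r scalerA.
Qed.

Lemma zvc0 (z v c b : V) :  z - v + c = (z + b - v) + (c - b).
Proof. by rewrite addrA [z + b - v]addrAC [RHS]addrAC addrK. Qed.
Lemma zvc (z v c b : V) :  z - (v - c) = (z + b - v) + (c - b).
Proof. by rewrite -zvc0 opprB addrA addrAC. Qed.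
End AffL.

Section Norm.
Variable R : realType.
Variable V : normedModType R.

Lemma closure_normP (A : set V) x :
  closure A x <-> forall e, 0 < e -> exists a, A a /\ `|x - a| < e.
Proof.
split.
  move=> cx e e0; have [a [Aa xa]] := cx (ball x e) (nbhsx_ballx x e e0).
  by exists a; split => //; move: xa; rewrite -ball_normE.
move=> H B /nbhs_ballP [e e0 eB]; have [a [Aa xa]] := H e e0.
by exists a; split => //; apply: eB; rewrite -ball_normE.
Qed.

Lemma seg (O C : set V) z r b t :
  Defs.convex_set C -> C `<=` O -> 0 < r ->
  (forall v, `|z - v| < r -> aff O v -> C v) ->
  closure C b -> 0 <= t -> t < 1 ->
  exists2 rho, 0 < rho &
    forall v, `|((1 - t) *: z + t *: b) - v| < rho -> aff O v -> C v.
Proof.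
move=> cC CO r0 Hz cb t0 t1.
have s0 : 0 < 1 - t by rewrite subr_gt0.
have sr0 : 0 < (1 - t) * r / 2 by rewrite divr_gt0 ?mulr_gt0.
exists ((1 - t) * r / 2) => // v wv Av.
have [c [Cc bc]] := (closure_normP C b).1 cb _ sr0.
pose z' := (1 - t)^-1 *: v + (1 - (1 - t)^-1) *: c.
have Az' : aff O z' by apply: aff_comb2 => //; apply: aff_sub; apply: CO.
have sz' : (1 - t) *: z' = v - t *: c.
  rewrite /z' scalerDr !scalerA mulfV ?gt_eqF // scale1r mulrBr mulr1 mulfV ?gt_eqF//.
  by congr (_ + _); rewrite -scaleNr; congr (_ *: _); ring.
have Cz' : C z'.
  apply: Hz Az'.
  have -> : z - z' = (1 - t)^-1 *: ((1 - t) *: z - (1 - t) *: z').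
    by rewrite -scalerBr scalerA mulVf ?gt_eqF // scale1r.
  rewrite sz' normrZ gtr0_norm ?invr_gt0 //.
  rewrite (@zvc _ _ _ _ _ (t *: b)) -scalerBr.
  rewrite ltr_pdivrMl //.
  apply: (le_lt_trans (ler_normD _ _)).
  have h1 : `|t *: (c - b)| <= `|b - c|.
    rewrite normrZ ger0_norm // distrC -[leRHS]mul1r.
    by apply: ler_wpM2r => //; apply: ltW.
  have := normr_ge0 (b - c); lra.
have -> : v = (1 - t) *: z' + (1 - (1 - t)) *: c.
  by rewrite sz' (_ : 1 - (1 - t) = t) ?subrK //; ring.
apply: (cC z' c Cz' Cc (1 - t)); [exact: ltW | lra].
Qed.
End Norm.
Section Conv.
Variable R : realType.
Variable V : lmodType R.

Lemma convex_comb (C : set V) k (c : 'I_k -> V) (l : 'I_k -> R) c0 :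
  Defs.convex_set C -> C c0 -> (forall i, C (c i)) -> (forall i, 0 <= l i) ->
  \sum_i l i <= 1 ->
  C ((1 - \sum_i l i) *: c0 + \sum_i l i *: c i).
Proof.
move=> cC Cc0; elim: k c l => [|k IH] c l Cc l0 s1.
  by rewrite !big_ord0 subr0 scale1r addr0.
rewrite !big_ord_recr /=.
rewrite big_ord_recr /= in s1.
set L := \sum_(i < k) l (widen_ord (leqnSn k) i).
set ln := l ord_max.
rewrite -/L -/ln in s1.
have L0 : 0 <= L by apply: sumr_ge0 => i _.
have ln0 : 0 <= ln by apply: l0.
have [ln1|ln1] := eqVneq ln 1.
  have L00 : L = 0 by apply: le_anti; rewrite L0 andbT; move: s1; rewrite ln1; lra.
  have z : forall i, l (widen_ord (leqnSn k) i) = 0.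
    by move/eqP: L00; rewrite psumr_eq0 // => /allP H i; apply/eqP/H; rewrite mem_index_enum.
  rewrite big1; last by move=> i _; rewrite z scale0r.
  by rewrite L00 ln1 add0r subrr scale0r add0r scale1r add0r; apply: Cc.
have s0 : 0 < 1 - ln by rewrite subr_gt0 lt_neqAle ln1 /=; lra.
set S := \sum_(i < k) l (widen_ord (leqnSn k) i) *: c (widen_ord (leqnSn k) i).
have ln1' : ln != 1 by [].
have -> : (1 - (L + ln)) *: c0 + (S + ln *: c ord_max) =
  (1 - ln) *: ((1 - L / (1 - ln)) *: c0 +
     \sum_(i < k) (l (widen_ord (leqnSn k) i) / (1 - ln)) *: c (widen_ord (leqnSn k) i))
  + (1 - (1 - ln)) *: c ord_max.
  rewrite scalerDr scaler_sumr !scalerA addrA; congr (_ + _ + _).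
  - congr (_ *: _); field; by rewrite subr_eq0 eq_sym.
  - by apply: eq_bigr => i _; rewrite scalerA; congr (_ *: _); field; rewrite subr_eq0 eq_sym.
  - by congr (_ *: _); ring.
apply: cC; [|exact: Cc| exact: ltW|lra].
have := IH (fun i => c (widen_ord (leqnSn k) i)) (fun i => l (widen_ord (leqnSn k) i) / (1 - ln)).
have -> : \sum_(i < k) l (widen_ord (leqnSn k) i) / (1 - ln) = L / (1 - ln).
  by rewrite -mulr_suml.
apply => //.
- by move=> i; rewrite divr_ge0 // ltW.
- by rewrite ler_pdivrMr // mul1r; lra.
Qed.
End Conv.
Section MxNorm.
Variable R : realType.

Lemma entry_le_norm m n (M : 'M[R]_(m, n)) i j : `|M i j| <= `|M|.
Proof.
rewrite [leRHS]/Num.Def.normr /= mx_normrE.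
by apply/bigmax_geP; right => /=; exists (i, j).
Qed.

Lemma mulmx_bound a b (P : 'M[R]_(a, b)) :
  exists K, 0 <= K /\ forall u : 'rV[R]_a, `|u *m P| <= K * `|u|.
Proof.
exists (\sum_l \sum_j `|P l j|); split.
  by apply: sumr_ge0 => l _; apply: sumr_ge0.
move=> u.
rewrite [leLHS]/Num.Def.normr /= mx_normrE; apply: bigmax_le => [|[i j] _] /=.
  by apply: mulr_ge0; [apply: sumr_ge0 => l _; apply: sumr_ge0|].
rewrite mxE; apply: (le_trans (ler_norm_sum _ _ _)).
rewrite mulrC mulr_sumr; apply: ler_sum => l _.
rewrite normrM; apply: ler_pM => //.
  exact: entry_le_norm.
rewrite (bigD1 j) //= lerDl; apply: sumr_ge0 => *; done.
Qed.
End MxNorm.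
Arguments aff_sub {R V O x}.
Arguments aff_comb2 {R V O x y}.
Arguments seg {R V O C z r b t}.
Arguments closure_normP {R V A x}.
Arguments convex_comb {R V C k c l c0}.
Arguments entry_le_norm {R m n}.

Section FD.
Variable R : realType.
Variable V : normedModType R.
Variable N : nat.
Variable f : {linear V -> 'rV[R]_N}.
Hypothesis finj : injective f.
Hypothesis fb : forall k (P : 'M[R]_(N, k)),
  exists K, 0 <= K /\ forall x, `|f x *m P| <= K * `|x|.

Lemma interior_pt (O C : set V) : Defs.convex_set C -> C `<=` O ->
  O `<=` closure C -> O !=set0 ->
  exists z r, 0 < r /\ C z /\ forall v, `|z - v| < r -> aff O v -> C v.
Proof.
move=> cC CO OC [x0 Ox0].
have [c0 [Cc0 _]] := (@closure_normP _ _ C x0).1 (OC _ Ox0) 1 ltr01.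
pose Pk k := `[< exists M : 'M[R]_(k, N), row_free M /\
   forall i, exists c, C c /\ row i M = f (c - c0) >].
have P0 : Pk 0%N.
  apply/asboolP; exists 0; split; last by case.
  by rewrite /row_free mxrank0.
have Pub : forall k, Pk k -> (k <= N)%N.
  by move=> k /asboolP [M [fM _]]; move/eqP: fM => <-; exact: rank_leq_col.
case: (ex_maxnP (ex_intro _ 0%N P0) Pub) => k /asboolP [B [fB hB]] kmax.
have span : forall c, C c -> (f (c - c0) <= B)%MS.
  move=> c Cc; apply/negPn/negP => nsub.
  suff : Pk (k + 1)%N by move/kmax; rewrite addn1 ltnn.
  apply/asboolP; exists (col_mx B (f (c - c0))); split.
    have h1 : (k < \rank (B + f (c - c0)%R))%N.
      rewrite -{1}(eqP fB); apply: rank_ltmx; rewrite ltmxE addsmxSl /=.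
      by apply: contra nsub => H; exact: (submx_trans (addsmxSr _ _) H).
    have h2 : (\rank (col_mx B (f (c - c0)%R)) <= k + 1)%N by apply: rank_leq_row.
    by rewrite /row_free eqn_leq h2 -addsmxE addn1 h1.
  move=> i; case: (split_ordP i) => j ->.
    by rewrite rowKu; apply: hB.
  rewrite rowKd; exists c; split => //.
  by apply/matrixP => a b; rewrite !mxE (ord1 a) (ord1 j).
have clo : forall x, O x -> (f (x - c0) <= B)%MS.
  move=> x Ox; rewrite submxE; apply/negPn/negP => nz.
  set u := f (x - c0) *m cokermx B.
  have u0 : 0 < `|u| by rewrite normr_gt0.
  have [K [K0 HK]] := fb _ (cokermx B).
  have e0 : 0 < `|u| / (K + 1) by rewrite divr_gt0 // ltr_wpDl.
  have [c [Cc xc]] := (@closure_normP _ _ C x).1 (OC _ Ox) _ e0.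
  have cB : f (c - c0) *m cokermx B = 0 by apply/eqP; rewrite -submxE; apply: span.
  have ue : u = f (x - c) *m cokermx B.
    have xe : x - c0 = (x - c) + (c - c0) by rewrite addrA subrK.
    by rewrite /u xe linearD mulmxDl cB addr0.
  have := HK (x - c); rewrite -ue.
  move: xc; rewrite ltr_pdivlMr ?ltr_wpDl // => xc.
  have := normr_ge0 (x - c); nra.
have affB : forall x, aff O x -> (f (x - c0) <= B)%MS.
  move=> x [m [a [l [Oa [s1 ->]]]]].
  have -> : \sum_i l i *: a i - c0 = \sum_i l i *: (a i - c0).
    by rewrite (eq_bigr _ (fun i _ => scalerBr _ _ _)) sumrB -scaler_suml s1 scale1r.
  rewrite linear_sum; apply: summx_sub => i _; rewrite linearZ.
  by apply: scalemx_sub; apply: clo.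
have [c hc] := choice hB.
pose lam x := f (x - c0) *m pinvmx B.
have rep : forall x, (f (x - c0) <= B)%MS ->
    x = (1 - \sum_i lam x 0 i) *: c0 + \sum_i lam x 0 i *: c i.
  move=> x /mulmxKpV; rewrite -/(lam x) mulmx_sum_row => e.
  have e' : \sum_i lam x 0 i *: (c i - c0) = x - c0.
    apply: finj; rewrite linear_sum -e; apply: eq_bigr => i _.
    by rewrite linearZ (hc i).2.
  have : x = \sum_i lam x 0 i *: (c i - c0) + c0 by rewrite e' subrK.
  move=> xe; rewrite {1}xe (eq_bigr _ (fun i _ => scalerBr _ _ _)) sumrB -scaler_suml.
  rewrite scalerBl scale1r addrC.
  set T := \sum_i _ *: c i.
  by rewrite [T - _]addrC addrA.
pose mu : R := (k.+1)%:R^-1.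
have mu0 : 0 < mu by rewrite invr_gt0 ltr0n.
have muk : mu * (k%:R + 1) = 1 by rewrite /mu -natr1 mulVf // natr1 pnatr_eq0.
have mu1 : mu <= 1.
  have : 0 <= mu * k%:R by apply: mulr_ge0; [apply: ltW|apply: ler0n].
  by move: muk; rewrite mulrDr mulr1; lra.
pose z := c0 + \sum_i mu *: (c i - c0).
have fz : f (z - c0) = const_mx mu *m B.
  rewrite /z addrAC subrr add0r linear_sum mulmx_sum_row; apply: eq_bigr => i _.
  by rewrite linearZ (hc i).2 mxE.
have lz : lam z = const_mx mu by rewrite /lam fz mulmxKp.
have [K [K0 HK]] := fb _ (pinvmx B).
pose eps := mu * mu.
have eps0 : 0 < eps by rewrite mulr_gt0.
have epsmu : eps <= mu by rewrite /eps -[leRHS]mulr1 ler_wpM2l // ltW.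
have r0 : 0 < eps / (K + 1) by rewrite divr_gt0 // ltr_wpDl.
suff key : forall v, `|z - v| < eps / (K + 1) -> (f (v - c0) <= B)%MS -> C v.
  exists z, (eps / (K + 1)); split => //; split.
    by apply: key; [rewrite subrr normr0 | rewrite fz submxMl].
  by move=> v zv Av; apply: key zv (affB v Av).
move=> v zv Bv.
have d : forall i, `|mu - lam v 0 i| < eps.
  move=> i.
  have dE : lam z - lam v = f (z - v) *m pinvmx B.
    rewrite /lam -mulmxBl -linearB; congr (f _ *m _).
    by rewrite opprB addrA subrK.
  have e1 : `|mu - lam v 0 i| <= `|f (z - v) *m pinvmx B|.
    rewrite -dE; move: (lam z) (lam v) lz => Lz Lv ->.
    by have := @entry_le_norm _ _ _ (const_mx mu - Lv) 0 i; rewrite !mxE.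
  apply: (le_lt_trans e1); apply: (le_lt_trans (HK _)).
  move: zv; rewrite ltr_pdivlMr ?ltr_wpDl // => zv.
  have := normr_ge0 (z - v); nra.
rewrite (rep v Bv); apply: convex_comb => //.
- by move=> i; case: (hc i).
- move=> i; have := d i; rewrite ltr_norml; lra.
- apply: (@le_trans _ _ (\sum_(i < k) (mu + eps))).
    by apply: ler_sum => i _; have := d i; rewrite ltr_norml; lra.
  rewrite sumr_const card_ord -mulr_natl.
  have : 0 <= mu * mu by rewrite mulr_ge0 // ltW.
  rewrite /eps; move: muk; nra.
Qed.

Lemma ri_inner (O C : set V) a : Defs.convex_set C -> C `<=` O ->
  O `<=` closure C -> ri O a ->
  exists2 d, 0 < d & forall v, `|a - v| < d -> aff O v -> C v.
Proof.
move=> cC CO OC [Oa [del [del0 Hd]]].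
have [z [r [r0 [Cz Hz]]]] := @interior_pt _ _ cC CO OC (ex_intro _ a Oa).
pose eps := del / (2 * (`|a - z| + 1)).
have az0 : 0 < `|a - z| + 1 by rewrite ltr_wpDl.
have eps0 : 0 < eps by rewrite divr_gt0 // mulr_gt0.
pose b := (1 + eps) *: a - eps *: z.
have Ab : aff O b.
  have := @aff_comb2 _ _ O a z (1 + eps) (aff_sub Oa) (aff_sub (CO _ Cz)).
  by rewrite (_ : 1 - (1 + eps) = - eps) ?scaleNr //; ring.
have ab : `|a - b| < del.
  have -> : a - b = eps *: (z - a).
    by rewrite /b scalerDl scale1r scalerBr opprB addrC opprD addrA addrAC subrK.
  rewrite normrZ gtr0_norm // distrC.
  have : eps * (2 * (`|a - z| + 1)) = del by rewrite /eps mulfVK // mulf_neq0 // gt_eqF.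
  have := normr_ge0 (a - z); nra.
have Ob : O b by apply: Hd; split => //; rewrite -ball_normE.
pose t := (1 + eps)^-1.
have t0 : 0 < t by rewrite invr_gt0 addr_gt0.
have t1 : t < 1 by rewrite invf_lt1 ?addr_gt0 // ltrDl.
have [rho rho0 Hrho] := @seg _ _ O C z r b t cC CO r0 Hz (OC _ Ob) (ltW t0) t1.
exists rho => // v av Av; apply: Hrho Av.
suff -> : (1 - t) *: z + t *: b = a by [].
have e1 : t * (1 + eps) = 1 by rewrite mulVf // gt_eqF // addr_gt0.
have e2 : 1 - t = t * eps by rewrite -{1}e1; ring.
rewrite /b scalerBr !scalerA e1 scale1r e2.
by rewrite addrCA subrr addr0.
Qed.

Lemma ri_seg (O C : set V) a b t : Defs.convex_set C -> C `<=` O ->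
  O `<=` closure C -> ri O a -> O b -> 0 <= t -> t < 1 ->
  ri O ((1 - t) *: a + t *: b).
Proof.
move=> cC CO OC ra Ob t0 t1.
have [d d0 Hd] := @ri_inner _ _ _ cC CO OC ra.
have [rho rho0 Hrho] := @seg _ _ O C a d b t cC CO d0 Hd (OC _ Ob) t0 t1.
have Aw : aff O ((1 - t) *: a + t *: b).
  have := @aff_comb2 _ _ O a b (1 - t) (aff_sub ra.1) (aff_sub Ob).
  by rewrite (_ : 1 - (1 - t) = t) //; ring.
split; first by apply: CO; apply: Hrho => //; rewrite subrr normr0.
exists rho; split => // v [bv Av]; move: bv; rewrite -ball_normE /= => bv; apply: CO; exact: Hrho.
Qed.

Lemma ri_nonempty (O C : set V) : Defs.convex_set C -> C `<=` O ->
  O `<=` closure C -> O !=set0 -> ri O !=set0.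
Proof.
move=> cC CO OC On.
have [z [r [r0 [Cz Hz]]]] := @interior_pt _ _ cC CO OC On.
exists z; split; first exact: CO.
exists r; split => // v [bv Av]; move: bv; rewrite -ball_normE /= => bv; apply: CO; exact: Hz.
Qed.
End FD.


Arguments mulmx_bound {R a b}.
Section Inst.
Variable R : realType.

Definition FDim (V : normedModType R) := exists N (f : {linear V -> 'rV[R]_N}),
  injective f /\ (forall k (P : 'M[R]_(N, k)),
    exists K, 0 <= K /\ forall x, `|f x *m P| <= K * `|x|).

Lemma FDim_row n : FDim 'rV[R]_n.
Proof.
exists n, idfun; split => // k P.
have [K [K0 HK]] := mulmx_bound P; exists K; split => // x; exact: HK.
Qed.

Definition prmx n m (x : 'rV[R]_n * 'rV[R]_m) : 'rV[R]_(n + m) := row_mx x.1 x.2.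
Lemma prmx_lin n m : linear (@prmx n m).
Proof. by move=> a x y; rewrite /prmx /= scale_row_mx add_row_mx. Qed.
HB.instance Definition _ n m := GRing.isLinear.Build R _ _ _ (@prmx n m) (@prmx_lin n m).

Lemma FDim_prod n m : FDim ('rV[R]_n * 'rV[R]_m)%type.
Proof.
exists (n + m)%N, (@prmx n m); split.
  by move=> [x1 y1] [x2 y2] /eq_row_mx [/= -> ->].
move=> k P.
have [K1 [K10 H1]] := mulmx_bound (usubmx P).
have [K2 [K20 H2]] := mulmx_bound (dsubmx P).
exists (K1 + K2); split; first exact: addr_ge0.
move=> [x y]; rewrite /prmx /= -{1}(vsubmxK P) mul_row_col.
apply: (le_trans (ler_normD _ _)).
have hx : `|x| <= `|(x, y)| by rewrite prod_normE /= le_max lexx.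
have hy : `|y| <= `|(x, y)| by rewrite prod_normE /= le_max lexx orbT.
have := H1 x; have := H2 y.
have : K1 * `|x| <= K1 * `|(x, y)| by apply: ler_wpM2l.
have : K2 * `|y| <= K2 * `|(x, y)| by apply: ler_wpM2l.
lra.
Qed.

Lemma ri_seg' (V : normedModType R) (O C : set V) a b t : FDim V ->
  Defs.convex_set C -> C `<=` O -> O `<=` closure C -> ri O a -> O b ->
  0 <= t -> t < 1 -> ri O ((1 - t) *: a + t *: b).
Proof. by move=> [N [f [fi fb]]]; apply: (@ri_seg R V N f fi fb). Qed.

Lemma ri_nonempty' (V : normedModType R) (O C : set V) : FDim V ->
  Defs.convex_set C -> C `<=` O -> O `<=` closure C -> O !=set0 -> ri O !=set0.
Proof. by move=> [N [f [fi fb]]]; apply: (@ri_nonempty R V N f fi fb). Qed.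

Lemma ext_id (V : lmodType R) (a z : V) (eps : R) : 0 < eps ->
  (1 - (1 + eps)^-1) *: z + (1 + eps)^-1 *: ((1 + eps) *: a - eps *: z) = a.
Proof.
move=> eps0.
have e1 : (1 + eps)^-1 * (1 + eps) = 1 by rewrite mulVf // gt_eqF // addr_gt0.
have e2 : 1 - (1 + eps)^-1 = (1 + eps)^-1 * eps by rewrite -{1}e1; ring.
by rewrite scalerBr !scalerA e1 scale1r e2 addrCA subrr addr0.
Qed.

Lemma ext_diff (V : lmodType R) (a z : V) (eps : R) :
  a - ((1 + eps) *: a - eps *: z) = eps *: (z - a).
Proof. by rewrite scalerDl scale1r scalerBr opprB addrC opprD addrA addrAC subrK. Qed.

Lemma ri_dom_lift n m (G : 'rV[R]_n -> set 'rV[R]_m) (CG : set ('rV[R]_n * 'rV[R]_m)) x0 :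
  Defs.convex_set CG -> CG `<=` gph G -> gph G `<=` closure CG ->
  ri (dom G) x0 -> exists y0, ri (gph G) (x0, y0).
Proof.
move=> cC Cs sC [[y1' Gy1'] [del [del0 Hd]]].
have [[x1 y1] r1] := @ri_nonempty' _ _ _ (FDim_prod n m) cC Cs sC (ex_intro _ (x0, y1') Gy1').
have Gx1 : G x1 y1 := r1.1.
pose eps := del / (2 * (`|x1 - x0| + 1)).
have az0 : 0 < `|x1 - x0| + 1 by rewrite ltr_wpDl.
have eps0 : 0 < eps by rewrite divr_gt0 // mulr_gt0.
pose x2 := (1 + eps) *: x0 - eps *: x1.
have Ax2 : aff (dom G) x2.
  have := @aff_comb2 _ _ (dom G) x0 x1 (1 + eps) (aff_sub (ex_intro _ y1' Gy1'))
    (aff_sub (ex_intro _ y1 Gx1)).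
  by rewrite (_ : 1 - (1 + eps) = - eps) ?scaleNr //; ring.
have ab : `|x0 - x2| < del.
  rewrite /x2 ext_diff normrZ gtr0_norm //.
  have : eps * (2 * (`|x1 - x0| + 1)) = del by rewrite /eps mulfVK // mulf_neq0 // gt_eqF.
  have := normr_ge0 (x1 - x0); nra.
have [y2 Gy2] : dom G x2 by apply: Hd; split => //; rewrite -ball_normE.
pose t := (1 + eps)^-1.
have t0 : 0 < t by rewrite invr_gt0 addr_gt0.
have t1 : t < 1 by rewrite invf_lt1 ?addr_gt0 // ltrDl.
have := @ri_seg' _ _ _ _ _ _ (FDim_prod n m) cC Cs sC r1 (Gy2 : gph G (x2, y2)) (ltW t0) t1.
exists ((1 - t) *: y1 + t *: y2).
move: H; rewrite (_ : (1 - t) *: (x1, y1) + t *: (x2, y2) = (x0, (1 - t) *: y1 + t *: y2)) //.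
by congr (_, _); rewrite /t /x2 ext_id.
Qed.
End Inst.


Lemma ri_sub (R : realType) (V : normedModType R) (O : set V) a : ri O a -> O a.
Proof. by case. Qed.
Arguments ri_sub {R V O a}.

Lemma ri_conv (R : realType) (V : normedModType R) (O C : set V) a b t : FDim R V ->
  Defs.convex_set C -> C `<=` O -> O `<=` closure C -> ri O a -> ri O b ->
  0 <= t -> t <= 1 -> ri O (t *: a + (1 - t) *: b).
Proof.
move=> FD cC CO OC ra rb t0 t1.
have [->|t1'] := eqVneq t 1; first by rewrite subrr scale0r addr0 scale1r.
rewrite addrC; have := @ri_seg' _ _ _ _ b a t FD cC CO OC rb (ri_sub ra) t0.
by apply; rewrite lt_neqAle t1' t1.
Qed.

Arguments ri_conv {R V O C a b t}.
Arguments ri_dom_lift {R n m G CG x0}.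

Theorem theorem4p5 (R : realType) (n p q : nat)
  (F : 'rV[R]_n -> set 'rV[R]_p) (G : 'rV[R]_n -> set 'rV[R]_q)
  (Theta : set 'rV[R]_n) :
  nearly_convex_map F -> nearly_convex_map G -> nearly_convex Theta ->
  ri (dom F) `&` ri (dom G) `&` ri Theta !=set0 ->
  nearly_convex_map
    (fun xuy : 'rV[R]_n * 'rV[R]_n * 'rV[R]_q =>
       if `[< Theta xuy.1.1 /\ G xuy.1.1 xuy.2 >]
       then F (xuy.1.1 + xuy.1.2) else set0).
Proof.
move=> [CF [cF [CFs sCF]]] [CG [cG [CGs sCG]]] [CT [cT [CTs sCT]]] [x0 [[rF rG] rT]].
have [z0 rz0] := ri_dom_lift cF CFs sCF rF.
have [y0 ry0] := ri_dom_lift cG CGs sCG rG.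
have FDn := FDim_row R n.
have FDF := FDim_prod R n p.
have FDG := FDim_prod R n q.
pose D := [set s : 'rV[R]_n * 'rV[R]_n * 'rV[R]_q * 'rV[R]_p |
  ri Theta s.1.1.1 /\ ri (gph G) (s.1.1.1, s.1.2) /\
  ri (gph F) (s.1.1.1 + s.1.1.2, s.2)].
exists D; split; [|split].
- move=> [[[x1 u1] y1] z1] [[[x2 u2] y2] z2] [/= h1 [h2 h3]] [/= k1 [k2 k3]] t t0 t1.
  rewrite -[t *: _ + _]/(t *: x1 + (1-t) *: x2, t *: u1 + (1-t) *: u2,
     t *: y1 + (1-t) *: y2, t *: z1 + (1-t) *: z2) /=.
  split; [|split].
  + exact: (ri_conv FDn cT CTs sCT).
  + exact: (@ri_conv _ _ _ _ (x1, y1) (x2, y2) t FDG cG CGs sCG h2 k2).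
  + have := @ri_conv _ _ _ _ (x1 + u1, z1) (x2 + u2, z2) t FDF cF CFs sCF h3 k3 t0 t1.
    rewrite -[t *: (x1 + u1, z1) + _]/(t *: (x1 + u1) + (1 - t) *: (x2 + u2),
       t *: z1 + (1 - t) *: z2).
    by rewrite !scalerDr addrACA.
- move=> [[[x u] y] z] [/= h1 [h2 h3]].
  have hT : Theta x /\ G x y := conj (ri_sub h1) (ri_sub h2).
  rewrite /gph /= asboolT //; exact: (ri_sub h3).
move=> [[[x u] y] z]; rewrite /gph /=.
case: asboolP => [[Tx Gxy] Fz|_ []].
pose d0 := (x0, (0 : 'rV[R]_n), y0, z0).
pose s := (x, u, y, z).
apply/closure_normP => e e0.
have sd0 : 0 < `|s - d0| + 1 by rewrite ltr_wpDl.
pose al := e / (2 * (`|s - d0| + 1)).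
have al0 : 0 < al by rewrite divr_gt0 // mulr_gt0.
pose tau := al / (1 + al).
have tau0 : 0 < tau by rewrite divr_gt0 // addr_gt0.
have tau1 : tau < 1 by rewrite ltr_pdivrMr ?addr_gt0 //; lra.
have taual : tau <= al.
  by rewrite ler_pdivrMr ?addr_gt0 //; nra.
pose t := 1 - tau.
have t0 : 0 <= t by rewrite subr_ge0 ltW.
have t1 : t < 1 by rewrite /t; lra.
have tt : 1 - t = tau by rewrite /t; ring.
exists ((1 - t) *: d0 + t *: s); split.
  rewrite -[(1 - t) *: d0 + t *: s]/((1 - t) *: x0 + t *: x, (1 - t) *: 0 + t *: u,
     (1 - t) *: y0 + t *: y, (1 - t) *: z0 + t *: z) /=.
  split; [|split].
  - exact: (@ri_seg' _ _ _ _ x0 x t FDn cT CTs sCT rT Tx t0 t1).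
  - exact: (@ri_seg' _ _ _ _ (x0, y0) (x, y) t FDG cG CGs sCG ry0 Gxy t0 t1).
  - have := @ri_seg' _ _ _ _ (x0, z0) (x + u, z) t FDF cF CFs sCF rz0 Fz t0 t1.
    rewrite -[(1 - t) *: (x0, z0) + _]/((1 - t) *: x0 + t *: (x + u),
       (1 - t) *: z0 + t *: z).
    by rewrite scaler0 add0r scalerDr addrA.
have -> : s - ((1 - t) *: d0 + t *: s) = (1 - t) *: (s - d0).
  by rewrite scalerBr [(1 - t) *: s]scalerBl scale1r opprD addrA addrAC.
rewrite normrZ ger0_norm ?tt; last exact: ltW.
have : al * (2 * (`|s - d0| + 1)) = e by rewrite /al mulfVK // mulf_neq0 // gt_eqF.
have : tau * `|s - d0| <= al * `|s - d0| by apply: ler_wpM2r.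
have := normr_ge0 (s - d0); nra.
Qed.
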